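(* Let $F$ be a nonempty subset of $\mathbb{R}^2$ and $u \in \mathbb{S}$. If $F - F = \{x - y : x,y \in F\}$ is disjoint from some double wedge around $u$, then the restriction of $T_u$ to $F$ is a quasi-isometric embedding $F \to \mathbb{R}$.
   Context: $\mathbb{S}$ is the unit circle in $\mathbb{R}^2$. For $u = (u_1,u_2) \in \mathbb{S}$, $T_u : \mathbb{R}^2 \to \mathbb{R}$ is the orthogonal projection parallel to $u$, i.e. $T_u(x) = \langle x, (u_2,-u_1)\rangle$, so $T_u(x)=T_u(y)$ iff $x - y \in \mathbb{R}u$. A double wedge around $u$ is a set $C^u_{s,\varepsilon} := \{tv : t \in \mathbb{R}, |t| > s, v \in \mathbb{S}, \|v-u\| < \varepsilon\}$ for some $s,\varepsilon > 0$. For $\lambda,\delta>0$, a map $f : X \to Y$ between subsets of Euclidean spaces is a $(\lambda,\delta)$-quasi-isometry if $\frac{1}{\lambda}\|x-x'\| - \delta \leq \|f(x)-f(x')\| \leq \lambda\|x-x'\| + \delta$ for all $x,x' \in X$ and every $y \in Y$ is within distance $<\delta$ of some $f(x)$; a quasi-isometry is a $(\lambda,\delta)$-quasi-isometry for some $\lambda,\delta>0$. A map $g : X \to \mathbb{R}$ is a quasi-isometric embedding if $g$ is a quasi-isometry $X \to g(X)$. *)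

(* Defs.v *)
From Stdlib Require Import Reals.
Open Scope R_scope.

Definition vsub (x y : R * R) : R * R := (fst x - fst y, snd x - snd y).
Definition vscale (t : R) (v : R * R) : R * R := (t * fst v, t * snd v).

Definition norm2 (x : R * R) : R := sqrt (fst x ^ 2 + snd x ^ 2).

Definition in_S (u : R * R) : Prop := norm2 u = 1.

Definition T (u : R * R) (x : R * R) : R := fst x * snd u + snd x * (- fst u).

Definition double_wedge (u : R * R) (s eps : R) (z : R * R) : Prop :=
  exists (t : R) (v : R * R),
    Rabs t > s /\ in_S v /\ norm2 (vsub v u) < eps /\ z = vscale t v.

Definition diff_set (F : R * R -> Prop) (z : R * R) : Prop :=
  exists x y, F x /\ F y /\ z = vsub x y.

Definition quasi_isometry_R2_R (X : R * R -> Prop) (Y : R -> Prop)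
    (f : R * R -> R) (lam del : R) : Prop :=
  (forall x x', X x -> X x' ->
      / lam * norm2 (vsub x x') - del <= Rabs (f x - f x') /\
      Rabs (f x - f x') <= lam * norm2 (vsub x x') + del) /\
  (forall y, Y y -> exists x, X x /\ Rabs (y - f x) < del).

Definition image (X : R * R -> Prop) (g : R * R -> R) (y : R) : Prop :=
  exists x, X x /\ y = g x.

Definition qi_embedding (X : R * R -> Prop) (g : R * R -> R) : Prop :=
  exists lam del, lam > 0 /\ del > 0 /\ quasi_isometry_R2_R X (image X g) g lam del.

(* Main.v *)
Require Import Defs.
From Stdlib Require Import Reals Lra Psatz.
Open Scope R_scope.

Lemma sq_norm2 (z : R * R) : norm2 z * norm2 z = fst z ^ 2 + snd z ^ 2.
Proof. unfold norm2. apply sqrt_sqrt. nra. Qed.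

Lemma norm2_ge0 (z : R * R) : 0 <= norm2 z.
Proof. unfold norm2. apply sqrt_pos. Qed.

Lemma side (z u : R * R) (t eps : R) (sg : R) :
  t > 0 -> t * t = fst z ^ 2 + snd z ^ 2 -> fst u ^ 2 + snd u ^ 2 = 1 ->
  sg * sg = 1 ->
  ~ norm2 (vsub (sg * fst z / t, sg * snd z / t) u) < eps -> eps > 0 ->
  eps * eps * (t * t) <= 2 * (t * t) - 2 * t * sg * (fst z * fst u + snd z * snd u).
Proof.
  intros Ht Ht2 Hu Hsg Hn He.
  set (X := (sg * fst z / t - fst u) ^ 2 + (sg * snd z / t - snd u) ^ 2).
  assert (HX : norm2 (vsub (sg * fst z / t, sg * snd z / t) u) = sqrt X) by reflexivity.
  rewrite HX in Hn.
  assert (HX0 : 0 <= X) by (unfold X; apply Rplus_le_le_0_compat; apply pow2_ge_0).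
  assert (HXs : sqrt X * sqrt X = X) by (apply sqrt_sqrt; auto).
  apply Rnot_lt_le in Hn.
  assert (Hge : eps * eps <= X) by nra.
  assert (HXt : X * (t * t) = 2 * (t * t) - 2 * t * sg * (fst z * fst u + snd z * snd u)).
  { unfold X. destruct z as [z1 z2]; destruct u as [u1 u2]; cbn [fst snd] in *.
    replace ((sg * z1 / t - u1) ^ 2 + (sg * z2 / t - u2) ^ 2) with
      ((sg*sg*(z1^2+z2^2) - 2*t*sg*(z1*u1+z2*u2) + t*t*(u1^2+u2^2)) / (t*t)) by (field; lra).
    rewrite Hsg, Hu, <- Ht2. field. lra. }
  rewrite <- HXt. nra.
Qed.

Lemma key (u z : R * R) (s eps : R) :
  fst u ^ 2 + snd u ^ 2 = 1 -> s > 0 -> eps > 0 ->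
  (forall t v, Rabs t > s -> in_S v -> norm2 (vsub v u) < eps -> z = vscale t v -> False) ->
  norm2 z > s ->
  Rmin eps 1 / 2 * norm2 z <= Rabs (fst z * snd u - snd z * fst u).
Proof.
  intros Hu Hs He Hw Hz.
  set (t := norm2 z) in *.
  assert (Ht2 : t * t = fst z ^ 2 + snd z ^ 2) by apply sq_norm2.
  assert (Ht : t > 0) by lra.
  assert (Hgen : forall sg, sg * sg = 1 ->
    eps * eps * (t * t) <= 2 * (t * t) - 2 * t * sg * (fst z * fst u + snd z * snd u)).
  { intros sg Hsg. apply side; auto. intro Hlt.
    apply (Hw (sg * t) (sg * fst z / t, sg * snd z / t)).
    - rewrite Rabs_mult. assert (Rabs sg = 1).
      { destruct (Rle_dec 0 sg). rewrite Rabs_right; nra. rewrite Rabs_left; nra. }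
      rewrite H, Rabs_right; lra.
    - unfold in_S, norm2; cbn [fst snd].
      replace ((sg * fst z / t) ^ 2 + (sg * snd z / t) ^ 2) with 1. apply sqrt_1.
      field_simplify; [|lra].
      replace (sg ^ 2 * fst z ^ 2 + sg ^ 2 * snd z ^ 2) with (sg*sg*(fst z^2 + snd z^2)) by ring.
      rewrite Hsg, <- Ht2. field. lra.
    - exact Hlt.
    - destruct z as [z1 z2]; unfold vscale; cbn [fst snd]. f_equal.
      + replace (sg*t*(sg*z1/t)) with (sg*sg*z1) by (field; lra). rewrite Hsg; ring.
      + replace (sg*t*(sg*z2/t)) with (sg*sg*z2) by (field; lra). rewrite Hsg; ring. }
  pose proof (Hgen 1 ltac:(ring)) as H1.
  pose proof (Hgen (-1) ltac:(ring)) as H2.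
  set (e := Rmin eps 1).
  assert (He1 : e <= 1) by apply Rmin_r.
  assert (He2 : e <= eps) by apply Rmin_l.
  assert (He0 : 0 < e) by (unfold e; apply Rmin_glb_lt; lra).
  set (p := fst z * fst u + snd z * snd u) in *.
  set (q := fst z * snd u - snd z * fst u).
  assert (Hpq : p * p + q * q = t * t).
  { rewrite Ht2. unfold p, q.
    replace (fst z ^ 2 + snd z ^ 2) with ((fst z ^ 2 + snd z ^ 2) * (fst u ^ 2 + snd u ^ 2)) by (rewrite Hu; ring).
    ring. }
  assert (Hee : e * e <= eps * eps) by nra.
  assert (A1 : e * e * t <= 2 * t - 2 * p) by nra.
  assert (A2 : e * e * t <= 2 * t + 2 * p) by nra.
  assert (Hm : 0 <= t * (1 - e * e / 2)) by nra.
  assert (Hp2 : p * p <= (t * (1 - e * e / 2)) * (t * (1 - e * e / 2))) by nra.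
  assert (Hq2 : (e / 2 * t) * (e / 2 * t) <= q * q) by nra.
  fold q.
  destruct (Rle_dec 0 q).
  - rewrite Rabs_right by lra. nra.
  - rewrite Rabs_left by lra. nra.
Qed.

Theorem lemma3p1 (F : R * R -> Prop) (u : R * R) :
  (exists x, F x) ->
  in_S u ->
  (exists s eps, s > 0 /\ eps > 0 /\
     forall z, ~ (diff_set F z /\ double_wedge u s eps z)) ->
  qi_embedding F (T u).
Proof.
  intros _ HuS [s [eps [Hs [He Hw]]]].
  assert (Hu : fst u ^ 2 + snd u ^ 2 = 1).
  { unfold in_S, norm2 in HuS. rewrite <- (sqrt_sqrt (fst u ^ 2 + snd u ^ 2)) by nra.
    rewrite HuS. ring. }
  set (e := Rmin eps 1).
  assert (He1 : e <= 1) by apply Rmin_r.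
  assert (He0 : 0 < e) by (unfold e; apply Rmin_glb_lt; lra).
  exists (2 / e), (s + 1). split; [apply Rdiv_lt_0_compat; lra|]. split; [lra|].
  split.
  - intros x x' Hx Hx'.
    set (z := vsub x x').
    assert (HT : T u x - T u x' = fst z * snd u - snd z * fst u).
    { unfold z, T, vsub; simpl. ring. }
    rewrite HT.
    set (q := fst z * snd u - snd z * fst u).
    set (t := norm2 z).
    assert (Ht0 : 0 <= t) by apply norm2_ge0.
    assert (Ht2 : t * t = fst z ^ 2 + snd z ^ 2) by apply sq_norm2.
    assert (Hq : Rabs q <= t).
    { assert (p2 : q * q <= t * t).
      { rewrite Ht2. unfold q.
        replace (fst z ^ 2 + snd z ^ 2) with ((fst z ^ 2 + snd z ^ 2) * (fst u ^ 2 + snd u ^ 2)) by (rewrite Hu; ring).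
        pose proof (pow2_ge_0 (fst z * fst u + snd z * snd u)). nra. }
      destruct (Rle_dec 0 q); [rewrite Rabs_right | rewrite Rabs_left]; nra. }
    assert (Hinv : / (2 / e) = e / 2) by (field; lra).
    rewrite Hinv.
    assert (Hl : 2 <= 2 / e).
    { apply (Rmult_le_reg_r e); [lra|]. unfold Rdiv. rewrite Rmult_assoc, Rinv_l; lra. }
    split.
    + destruct (Rle_dec t s).
      * pose proof (Rabs_pos q). nra.
      * assert (K : e / 2 * t <= Rabs q).
        { apply (key u z s eps); [exact Hu|exact Hs|exact He| |apply Rnot_le_gt; exact n].
          intros t0 v Ht0' Hv Hvu Hzv. apply (Hw z). split.
          - exists x, x'. auto.
          - exists t0, v. auto. }
        lra.
    + nra.
  - intros y [x [Hx ->]]. exists x. split; auto.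
    replace (T u x - T u x) with 0 by ring. rewrite Rabs_R0. lra.
Qed.
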